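(* Let $(K,\alpha_K)$ be a Hom-Leibniz $n$-algebra with ${}_nHL_0^\alpha(K)={}_nHL_1^\alpha(K)=0$. Then every central extension $0\to(M,\alpha_M)\to(K,\alpha_K)\xrightarrow{\pi}(L,\alpha_L)\to0$ is a universal central extension.
   Context: Fix a field $\mathbb K$ and $n\ge2$. A (multiplicative) Hom-Leibniz $n$-algebra is a $\mathbb K$-vector space $L$ with an $n$-linear bracket and a linear map $\alpha_L$ preserving the bracket, satisfying $[[x_1,\dots,x_n],\alpha_L(y_1),\dots,\alpha_L(y_{n-1})]=\sum_{i=1}^n[\alpha_L(x_1),\dots,[x_i,y_1,\dots,y_{n-1}],\dots,\alpha_L(x_n)]$. Homomorphisms preserve brackets and commute with twisting maps. Center $Z(K)$: elements $x$ with every bracket having $x$ in some position equal to $0$. An extension of $L$ is a surjective homomorphism $\pi:K\to L$ with kernel $M$; central if $M\subseteq Z(K)$; universal central if central and for every central extension $\pi':K'\to L$ there is a unique homomorphism $h:K\to K'$ with $\pi'\circ h=\pi$. Define $\delta_1:K^{\otimes n}\to K$, $\delta_1(x_1\otimes\dots\otimes x_n)=[x_1,\dots,x_n]$, and $\delta_2:K^{\otimes(2n-1)}\to K^{\otimes n}$, $\delta_2(x_1\otimes\dots\otimes x_n\otimes y_1\otimes\dots\otimes y_{n-1})=[x_1,\dots,x_n]\otimes\alpha_K(y_1)\otimes\dots\otimes\alpha_K(y_{n-1})-\sum_{i=1}^n\alpha_K(x_1)\otimes\dots\otimes[x_i,y_1,\dots,y_{n-1}]\otimes\dots\otimes\alpha_K(x_n)$.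 Then ${}_nHL_0^\alpha(K)=K/[K,\dots,K]$ and ${}_nHL_1^\alpha(K)=\ker\delta_1/\operatorname{im}\delta_2$. *)

(* Defs.v *)
From HB Require Import structures.
From mathcomp Require Import all_boot all_order all_algebra.
Set Implicit Arguments.
Unset Strict Implicit.
Unset Printing Implicit Defensive.
Import GRing.Theory.
Local Open Scope ring_scope.

Definition upd (V : Type) (m : nat) (x : {ffun 'I_m -> V}) (i : 'I_m) (v : V)
  : {ffun 'I_m -> V} := [ffun j => if j == i then v else x j].

(* (a, y_1, ..., y_{m-1}) as an m-tuple *)
Definition fcons (V : Type) (m : nat) (a : V) (y : {ffun 'I_m.-1 -> V})
  : {ffun 'I_m -> V} :=
  [ffun j : 'I_m => if val j is k.+1 then odflt a (omap y (insub k)) else a].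

Definition fmap (U V : Type) (m : nat) (f : U -> V) (x : {ffun 'I_m -> U})
  : {ffun 'I_m -> V} := [ffun j => f (x j)].

Definition multilinear (F : fieldType) (U V : lmodType F) (m : nat)
  (phi : {ffun 'I_m -> U} -> V) : Prop :=
  forall (x : {ffun 'I_m -> U}) (i : 'I_m) (a : F) (u v : U),
    phi (upd x i (a *: u + v)) = a *: phi (upd x i u) + phi (upd x i v).

Record hlalg (F : fieldType) (n : nat) := HLAlg {
  hl_car :> lmodType F;
  hl_br : {ffun 'I_n -> hl_car} -> hl_car;
  hl_alpha : hl_car -> hl_car;
  hl_alpha_lin : forall (a : F) (u v : hl_car),
      hl_alpha (a *: u + v) = a *: hl_alpha u + hl_alpha v;
  hl_br_lin : multilinear hl_br;
  hl_alpha_br : forall x, hl_alpha (hl_br x) = hl_br (fmap hl_alpha x);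
  hl_leibniz : forall (x : {ffun 'I_n -> hl_car}) (y : {ffun 'I_n.-1 -> hl_car}),
      hl_br (fcons (hl_br x) (fmap hl_alpha y))
      = \sum_(i < n) hl_br (upd (fmap hl_alpha x) i (hl_br (fcons (x i) y)))
}.
Arguments hl_br {F n} _ _.
Arguments hl_alpha {F n} _ _.

Section HL.
Variables (F : fieldType) (n : nat).

Definition hl_hom (A B : hlalg F n) (f : A -> B) : Prop :=
  [/\ forall (a : F) (u v : A), f (a *: u + v) = a *: f u + f v,
      forall x : {ffun 'I_n -> A}, f (hl_br A x) = hl_br B (fmap f x)
    & forall u : A, f (hl_alpha A u) = hl_alpha B (f u)].

Definition in_center (A : hlalg F n) (z : A) : Prop :=
  forall (x : {ffun 'I_n -> A}) (i : 'I_n), hl_br A (upd x i z) = 0.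

(* central extension pi : K -> L (kernel M = ker pi) *)
Definition central_ext (K L : hlalg F n) (pi : K -> L) : Prop :=
  [/\ hl_hom pi, forall l : L, exists k : K, pi k = l
    & forall k : K, pi k = 0 -> in_center k].

Definition universal_central_ext (K L : hlalg F n) (pi : K -> L) : Prop :=
  central_ext pi /\
  forall (K' : hlalg F n) (pi' : K' -> L), central_ext pi' ->
    (exists h : K -> K', hl_hom h /\ forall x, pi' (h x) = pi x) /\
    (forall h1 h2 : K -> K',
        hl_hom h1 -> (forall x, pi' (h1 x) = pi x) ->
        hl_hom h2 -> (forall x, pi' (h2 x) = pi x) ->
        forall x, h1 x = h2 x).

(* Elements of the tensor power A^{(x)m} are represented by formal sums
   sum_j c_j x^j_1 (x) ... (x) x^j_m, i.e. lists of (c_j, x^j). *)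
Definition fsum (A : lmodType F) (m : nat) := seq (F * {ffun 'I_m -> A}).

Definition fsum_eval (A V : lmodType F) (m : nat)
  (phi : {ffun 'I_m -> A} -> V) (s : fsum A m) : V :=
  \sum_(p <- s) p.1 *: phi p.2.

(* s represents 0 in A^{(x)m}: killed by every m-linear map (universal
   property of the tensor product) *)
Definition tensor_zero (A : lmodType F) (m : nat) (s : fsum A m) : Prop :=
  forall (V : lmodType F) (phi : {ffun 'I_m -> A} -> V),
    multilinear phi -> fsum_eval phi s = 0.

Definition fsum_sub (A : lmodType F) (m : nat) (s t : fsum A m) : fsum A m :=
  s ++ [seq (- q.1, q.2) | q <- t].

Definition delta1 (K : hlalg F n) (s : fsum K n) : K := fsum_eval (hl_br K) s.

(* delta_2 on a generator x_1 (x) ... (x) x_n (x) y_1 (x) ... (x) y_{n-1}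
   of K^{(x)(2n-1)} *)
Definition delta2_gen (K : hlalg F n)
  (xy : {ffun 'I_n -> K} * {ffun 'I_n.-1 -> K}) : fsum K n :=
  (1, fcons (hl_br K xy.1) (fmap (hl_alpha K) xy.2)) ::
  [seq (-1, upd (fmap (hl_alpha K) xy.1) i (hl_br K (fcons (xy.1 i) xy.2)))
  | i <- enum 'I_n].

Definition delta2 (K : hlalg F n)
  (u : seq (F * ({ffun 'I_n -> K} * {ffun 'I_n.-1 -> K}))) : fsum K n :=
  flatten [seq [seq (p.1 * q.1, q.2) | q <- delta2_gen p.2] | p <- u].

(* nHL_0(K) = K / [K,...,K] = 0 : every element lies in the span of brackets *)
Definition HL0_zero (K : hlalg F n) : Prop :=
  forall z : K, exists s : fsum K n, z = delta1 s.

(* nHL_1(K) = ker delta1 / im delta2 = 0 *)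
Definition HL1_zero (K : hlalg F n) : Prop :=
  forall s : fsum K n, delta1 s = 0 ->
    exists u, tensor_zero (fsum_sub s (delta2 u)).

End HL.

(* Main.v *)
Require Import Defs.
From mathcomp Require Import all_boot all_order all_algebra.
Set Implicit Arguments.
Unset Strict Implicit.
Unset Printing Implicit Defensive.
Import GRing.Theory.
Local Open Scope ring_scope.

Section Aux.
Variable F : fieldType.

Definition islin (U V : lmodType F) (f : U -> V) :=
  forall a u v, f (a *: u + v) = a *: f u + f v.

Lemma lin0 (U V : lmodType F) (f : U -> V) : islin f -> f 0 = 0.
Proof.
move=> H; have h := H 1 0 0; rewrite !scale1r addr0 in h.
by apply: (addrI (f 0)); rewrite addr0 -h.
Qed.

Lemma linD (U V : lmodType F) (f : U -> V) u v : islin f -> f (u + v) = f u + f v.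
Proof. by move=> H; rewrite -{1}[u]scale1r H scale1r. Qed.

Lemma linZ (U V : lmodType F) (f : U -> V) a u : islin f -> f (a *: u) = a *: f u.
Proof. by move=> H; rewrite -[a *: u]addr0 H lin0 // addr0. Qed.

Lemma linB (U V : lmodType F) (f : U -> V) u v : islin f -> f (u - v) = f u - f v.
Proof. by move=> H; rewrite linD // -scaleN1r linZ // scaleN1r. Qed.

Lemma lin_fsum (A U V : lmodType F) m (phi : {ffun 'I_m -> A} -> U) (f : U -> V) s :
  islin f -> f (fsum_eval phi s) = fsum_eval (fun x => f (phi x)) s.
Proof.
move=> H; rewrite /fsum_eval; elim: s => [|p s IH]; first by rewrite !big_nil lin0.
by rewrite !big_cons linD // linZ // IH.
Qed.

Lemma eval_sub (A V : lmodType F) m (phi : {ffun 'I_m -> A} -> V) s t :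
  fsum_eval phi (fsum_sub s t) = fsum_eval phi s - fsum_eval phi t.
Proof.
rewrite /fsum_eval /fsum_sub big_cat big_map /= -sumrN.
by congr (_ + _); apply: eq_bigr => q _; rewrite scaleNr.
Qed.

Lemma eval_scale (A V : lmodType F) m (phi : {ffun 'I_m -> A} -> V) a s :
  fsum_eval phi [seq (a * q.1, q.2) | q <- s] = a *: fsum_eval phi s.
Proof.
rewrite /fsum_eval big_map scaler_sumr; apply: eq_bigr => q _ /=.
by rewrite scalerA.
Qed.

Lemma eval_cat (A V : lmodType F) m (phi : {ffun 'I_m -> A} -> V) s t :
  fsum_eval phi (s ++ t) = fsum_eval phi s + fsum_eval phi t.
Proof. by rewrite /fsum_eval big_cat. Qed.

Lemma eval_delta2 n (K : hlalg F n) (V : lmodType F) (phi : {ffun 'I_n -> K} -> V) u :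
  fsum_eval phi (delta2 u) = \sum_(p <- u) p.1 *: fsum_eval phi (delta2_gen p.2).
Proof.
rewrite /delta2 /fsum_eval big_flatten big_map; apply: eq_bigr => p _.
rewrite big_map scaler_sumr; apply: eq_bigr => q _ /=.
by rewrite scalerA.
Qed.

Lemma fcons_map (U V : Type) m (f : U -> V) a (y : {ffun 'I_m.-1 -> U}) (j : 'I_m) :
  f (fcons a y j) = fcons (f a) (fmap f y) j.
Proof.
rewrite /fcons /fmap !ffunE; case: j => [[|k] Hk] //=.
by case: insubP => [u _ _|_] //=; rewrite ffunE.
Qed.

Lemma fmap_upd (U V : Type) m (f : U -> V) (x : {ffun 'I_m -> U}) i v :
  fmap f (upd x i v) = upd (fmap f x) i (f v).
Proof. by apply/ffunP => j; rewrite !ffunE; case: eqP. Qed.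

Lemma perturb n (K' : hlalg F n) (V : lmodType F) (p : K' -> V) :
  islin p -> (forall k, p k = 0 -> in_center k) ->
  forall a b : {ffun 'I_n -> K'}, (forall j, p (a j) = p (b j)) ->
  hl_br K' a = hl_br K' b.
Proof.
move=> Hl Hc a b Hab.
have step : forall m, (m <= n)%N ->
    hl_br K' a = hl_br K' [ffun j : 'I_n => if (j < m)%N then b j else a j].
  elim=> [|m IH] Hm.
    by apply: f_equal; apply/ffunP => j; rewrite ffunE ltn0.
  rewrite IH; last by apply: ltnW.
  pose i := Ordinal Hm.
  pose w := [ffun j : 'I_n => if (j < m)%N then b j else a j].
  have E : w = upd w i (1 *: b i + (a i - b i)).
    apply/ffunP=> j. rewrite /upd !ffunE. case: eqP => [->|_]; last by []. rewrite scale1r addrC subrK. rewrite /= ltnn. done.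
  rewrite -/w E hl_br_lin scale1r.
  have -> : hl_br K' (upd w i (a i - b i)) = 0.
    by apply: Hc; rewrite linB // Hab subrr.
  rewrite addr0; apply: f_equal; apply/ffunP=> j; rewrite /upd !ffunE.
  case: eqP => [->|ne]; first by rewrite /= ltnSn.
  have ne' : (nat_of_ord j != m) by apply/eqP => e; apply: ne; exact: val_inj.
  by rewrite ltnS [(j <= m)%N]leq_eqVlt (negbTE ne').
rewrite (step n (leqnn n)); apply: f_equal; apply/ffunP => j.
by rewrite ffunE ltn_ord.
Qed.

End Aux.


Lemma fmapE (U V : Type) m (f : U -> V) (x : {ffun 'I_m -> U}) j : fmap f x j = f (x j).
Proof. by rewrite ffunE. Qed.
Lemma updE (V : Type) m (x : {ffun 'I_m -> V}) i v j : upd x i v j = if j == i then v else x j.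
Proof. by rewrite ffunE. Qed.

Theorem theorem3p11 (F : fieldType) (n : nat) (hn : (2 <= n)%N)
  (K L : hlalg F n) (pi : K -> L) :
  HL0_zero K -> HL1_zero K -> central_ext pi -> universal_central_ext pi.
Proof.
move=> H0 H1 Hpi; split => // K' pi' Hpi'.
have [[pilin pibr pial] pisurj picen] := Hpi.
have [[p'lin p'br p'al] p'surj p'cen] := Hpi'.
have pert := perturb p'lin p'cen.
split.
  have exS (k : K) : exists k0 : K', pi' k0 == pi k.
    by have [k0 e] := p'surj (pi k); exists k0; apply/eqP.
  pose sig (k : K) : K' := xchoose (exS k).
  have sigP k : pi' (sig k) = pi k by apply/eqP; exact: xchooseP (exS k).
  pose Phi (x : {ffun 'I_n -> K}) : K' := hl_br K' (fmap sig x).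
  have Phi_ml : multilinear Phi.
    move=> x i a u v; rewrite /Phi !fmap_upd.
    rewrite (pert (upd (fmap sig x) i (sig (a *: u + v)))
                  (upd (fmap sig x) i (a *: sig u + sig v))); last first.
      by move=> j; rewrite !(fmapE, updE); case: eqP => // _; rewrite sigP pilin p'lin !sigP.
    by rewrite hl_br_lin.
  have Phi_d2 xy : fsum_eval Phi (delta2_gen xy) = 0.
    case: xy => x y; rewrite /fsum_eval /delta2_gen big_cons big_map big_enum /= scale1r.
    apply/eqP; rewrite addr_eq0 -sumrN; apply/eqP.
    rewrite /Phi (pert _ (fcons (hl_br K' (fmap sig x)) (fmap (hl_alpha K') (fmap sig y)))); last first.
      move=> j; rewrite !(fmapE, updE) sigP fcons_map [in RHS]fcons_map.
      congr (fcons _ _ j).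
        by rewrite pibr p'br; apply: f_equal; apply/ffunP => k; rewrite !(fmapE, updE) sigP.
      by apply/ffunP => k; rewrite !(fmapE, updE) p'al pial sigP.
    rewrite hl_leibniz; apply: eq_bigr => i _; rewrite scaleN1r opprK.
    apply: pert => j; rewrite !(fmapE, updE) sigP; case: eqP => _.
      rewrite pibr p'br; apply: f_equal; apply/ffunP => k.
      rewrite !(fmapE, updE) fcons_map [in RHS]fcons_map sigP; congr (fcons _ _ k).
      by apply/ffunP => l; rewrite !(fmapE, updE) sigP.
    by rewrite p'al pial sigP.
  have exK (k : K) : exists s : fsum K n, k == delta1 s.
    by have [s e] := H0 k; exists s; apply/eqP.
  pose sK (k : K) := xchoose (exK k).
  have sKP k : k = delta1 (sK k) by apply/eqP; exact: xchooseP (exK k).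
  pose h k := fsum_eval Phi (sK k).
  have h_spec s : h (delta1 s) = fsum_eval Phi s.
    have E := sKP (delta1 s).
    have [u Hu] : exists u, tensor_zero (fsum_sub (fsum_sub s (sK (delta1 s))) (delta2 u)).
      by apply: H1; rewrite /delta1 eval_sub -/(delta1 _) -/(delta1 _) -E subrr.
    have := Hu _ _ Phi_ml.
    rewrite eval_sub eval_sub eval_delta2 big1 ?subr0; last by move=> p _; rewrite Phi_d2 scaler0.
    by move/eqP; rewrite subr_eq0 => /eqP.
  have hpi x : pi' (h x) = pi x.
     have [s ->] := H0 x.
    rewrite h_spec /delta1 !lin_fsum //; apply: eq_bigr => q _; apply: f_equal.
    rewrite /Phi p'br pibr; apply: f_equal; apply/ffunP => j; by rewrite !(fmapE, updE) sigP.
  exists h; split => //; split.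
  - move=> a u v; have [su ->] := H0 u; have [sv ->] := H0 v.
    rewrite !h_spec /delta1 -eval_scale -eval_cat -/(delta1 _) h_spec.
    by rewrite eval_cat eval_scale.
  - move=> x.
    have -> : hl_br K x = delta1 [:: (1, x)] by rewrite /delta1 /fsum_eval big_seq1 scale1r.
    rewrite h_spec /fsum_eval big_seq1 scale1r /Phi.
    by apply: pert => j; rewrite !(fmapE, updE) sigP hpi.
  - move=> u; have [s ->] := H0 u.
    rewrite h_spec /delta1 (lin_fsum (hl_br K) s (@hl_alpha_lin _ _ K)).
    rewrite (lin_fsum Phi s (@hl_alpha_lin _ _ K')).
    have -> : fsum_eval (fun x => hl_alpha K (hl_br K x)) s
        = fsum_eval (hl_br K) [seq (p.1, fmap (hl_alpha K) p.2) | p <- s].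
      by rewrite /fsum_eval big_map; apply: eq_bigr => p _; rewrite hl_alpha_br.
    rewrite -/(delta1 _) h_spec /fsum_eval big_map; apply: eq_bigr => p _ /=.
    rewrite /Phi hl_alpha_br; apply: f_equal; apply: pert => j.
    by rewrite !(fmapE, updE) sigP p'al pial sigP.
move=> h1 h2 [h1lin h1br h1al] h1pi [h2lin h2br h2al] h2pi x.
have [s ->] := H0 x.
rewrite /delta1 !lin_fsum //; apply: eq_bigr => q _; rewrite h1br h2br.
apply: f_equal; apply: pert => j; by rewrite !(fmapE, updE) h1pi h2pi.
Qed.
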